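(* Let $M$ be a mode for a program $P$ such that $P$ is safe w.r.t. $M$ and $P$ satisfies $M$. Let $\mathit{Diseqs}$ be a conjunction of disequations and $G$ a goal with $vars(\mathit{Diseqs})\cap vars(G)=\emptyset$. Then: (i) $(G,\mathit{Diseqs})\longmapsto^*_P\mathit{true}$ iff $(\mathit{Diseqs},G)\longmapsto^*_P\mathit{true}$; (ii) $\mu(P,(G,\mathit{Diseqs}))=\mu(P,(\mathit{Diseqs},G))$; (iii) $\nu(P,(G,\mathit{Diseqs}))=\nu(P,(\mathit{Diseqs},G))$.
   Context: Predicate symbols $\mathit{true}$, $=$, $\neq$ are basic, all others non-basic. Basic atoms: $\mathit{true}$, $t_1=t_2$, $t_1\neq t_2$ (disequation); non-basic atoms $p(t_1,\dots,t_m)$, $p$ non-basic. A goal is a conjunction of atoms ('','' associative, neutral element $\mathit{true}$). A clause $C$ is $A\leftarrow G$ with non-basic head $hd(C)$ and body $bd(C)$; a program is a set of clauses. All mgu's are relevant and idempotent. A variable $X$ is a local variable of goal $G$ in clause $H\leftarrow G_1,G,G_2$ iff $X\in vars(G)-vars(H,G_1,G_2)$. Operational semantics: (1) $(t_1=t_2,G)\longmapsto_P G\vartheta$ if $t_1,t_2$ unify with mgu $\vartheta$; (2) $(t_1\neq t_2,G)\longmapsto_P G$ if not unifiable; (3) $(A,G)\longmapsto_P(bd(C),G)\vartheta$ if $A$ is non-basic, $C$ a renamed apart clause of $P$ and $\vartheta$ an mgu of $A$ and $hd(C)$. A derivation is $G_0\longmapsto_P\cdots\longmapsto_P G_z$,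 of length $z$; successful if $G_z=\mathit{true}$. $\longmapsto^*_P$ is the reflexive-transitive closure. For a derivation $\delta$, $\lambda(\delta)$ is the number of goals $G_i$ in $\delta$ of the form $(A,K)$ with $A$ non-basic. $\mu(P,G)$ is the minimum of $\lambda(\delta)$ over successful derivations $\delta$ of $G$ in $P$, and $\infty$ if $G$ does not succeed; $\nu(P,G)$ is the minimum length of a successful derivation of $G$ in $P$, and $\infty$ if none. Modes: a mode for non-basic $p$ of arity $h$ is $p(m_1,\dots,m_h)$, $m_i\in\{+,?\}$; $t_i$ is an input argument iff $m_i=+$; variables in input arguments are input variables; a mode for a program contains exactly one mode per non-basic predicate occurring in it. An atom satisfies $M$ iff $M$ has a mode for its predicate and its input arguments are ground. $P$ satisfies $M$ iff for every non-basic $A_0$ satisfying $M$ and every non-basic $A$ and goal $G$ with $A_0\longmapsto^*_P(A,G)$, $A$ satisfies $M$. A clause $C$ is safe w.r.t. $M$ iff each variable of each disequation $t_1\neq t_2$ in $bd(C)$ is an input variable of $hd(C)$ or a local variable of $t_1\neq t_2$ in $C$; a program is safe iff all its clauses are. *)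

(* Defs.v *)
From Stdlib Require Import List Arith Relations ClassicalEpsilon.
Import ListNotations.

Inductive term : Type :=
| Var (x : nat)
| Fn (f : nat) (args : list term).

Inductive occ (x : nat) : term -> Prop :=
| occ_var : occ x (Var x)
| occ_fn f args t : In t args -> occ x t -> occ x (Fn f args).

Definition occ_terms (x : nat) (l : list term) : Prop :=
  exists t, In t l /\ occ x t.

Definition ground (t : term) : Prop := forall x, ~ occ x t.

Definition subst := nat -> term.

Fixpoint app_subst (s : subst) (t : term) : term :=
  match t with
  | Var x => s x
  | Fn f args => Fn f (map (app_subst s) args)
  end.

Definition unifier (s : subst) (l1 l2 : list term) : Prop :=
  map (app_subst s) l1 = map (app_subst s) l2.

Definition unifiable (l1 l2 : list term) : Prop :=
  exists s, unifier s l1 l2.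

(* relevant, idempotent most general unifier of the lists l1, l2
   (componentwise unification) *)
Definition is_mgu (th : subst) (l1 l2 : list term) : Prop :=
  unifier th l1 l2 /\
  (forall s, unifier s l1 l2 -> exists eta, forall x, s x = app_subst eta (th x)) /\
  (forall x, app_subst th (th x) = th x) /\
  (forall x, th x <> Var x ->
     occ_terms x (l1 ++ l2) /\ (forall y, occ y (th x) -> occ_terms y (l1 ++ l2))).

(* Basic atoms are [=] and [<>]; the basic atom [true] is the empty goal. *)
Inductive atom : Type :=
| Eq (t1 t2 : term)
| Neq (t1 t2 : term)
| Pred (p : nat) (args : list term).

Definition nonbasic (a : atom) : Prop :=
  match a with Pred _ _ => True | _ => False end.

Definition atom_terms (a : atom) : list term :=
  match a with
  | Eq t1 t2 => [t1; t2]
  | Neq t1 t2 => [t1; t2]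
  | Pred _ args => args
  end.

Definition subst_atom (s : subst) (a : atom) : atom :=
  match a with
  | Eq t1 t2 => Eq (app_subst s t1) (app_subst s t2)
  | Neq t1 t2 => Neq (app_subst s t1) (app_subst s t2)
  | Pred p args => Pred p (map (app_subst s) args)
  end.

(* A goal is a conjunction of atoms: a list, [","] is append, [true] is [nil]. *)
Definition goal := list atom.
Definition gtrue : goal := [].

Definition subst_goal (s : subst) (G : goal) : goal := map (subst_atom s) G.

Definition occ_atom (x : nat) (a : atom) : Prop := occ_terms x (atom_terms a).
Definition occ_goal (x : nat) (G : goal) : Prop := exists a, In a G /\ occ_atom x a.

(* A clause  p(args) <- body  (the head is non-basic by construction). *)
Record clause : Type := Clause { hd_pred : nat; hd_args : list term; bd : goal }.
Definition hd (C : clause) : atom := Pred (hd_pred C) (hd_args C).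

Definition occ_clause (x : nat) (C : clause) : Prop :=
  occ_atom x (hd C) \/ occ_goal x (bd C).

Definition program := list clause.

Definition rename_clause (rho : nat -> nat) (C : clause) : clause :=
  let s := fun x => Var (rho x) in
  Clause (hd_pred C) (map (app_subst s) (hd_args C)) (subst_goal s (bd C)).

Definition variant (C' C : clause) : Prop :=
  exists rho rho' : nat -> nat,
    (forall x, rho' (rho x) = x) /\ (forall x, rho (rho' x) = x) /\
    C' = rename_clause rho C.

Inductive step (P : program) : goal -> goal -> Prop :=
| step_eq t1 t2 G th :
    is_mgu th [t1] [t2] ->
    step P (Eq t1 t2 :: G) (subst_goal th G)
| step_neq t1 t2 G :
    ~ unifiable [t1] [t2] ->
    step P (Neq t1 t2 :: G) G
| step_res p args G C C' th :
    In C P ->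
    variant C' C ->
    (forall x, occ_clause x C' -> ~ occ_goal x (Pred p args :: G)) ->
    hd_pred C' = p ->
    is_mgu th args (hd_args C') ->
    step P (Pred p args :: G) (subst_goal th (bd C' ++ G)).

Definition steps (P : program) : goal -> goal -> Prop := clos_refl_trans _ (step P).

(* A derivation G0 |-> G1 |-> ... |-> Gz is represented by G0 and [G1;...;Gz]. *)
Fixpoint chain (P : program) (g : goal) (rest : list goal) : Prop :=
  match rest with
  | [] => True
  | g' :: r => step P g g' /\ chain P g' r
  end.

Definition successful_derivation (P : program) (G0 : goal) (rest : list goal) : Prop :=
  chain P G0 rest /\ last rest G0 = gtrue.

Definition starts_nonbasic (G : goal) : bool :=
  match G with Pred _ _ :: _ => true | _ => false end.

Definition lambda (G0 : goal) (rest : list goal) : nat :=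
  length (filter starts_nonbasic (G0 :: rest)).

(* minimum of a set of naturals; None encodes infinity (empty set) *)
Definition nat_min (S : nat -> Prop) : option nat :=
  epsilon (inhabits None)
    (fun o => match o with
              | None => ~ exists n, S n
              | Some m => S m /\ forall k, S k -> m <= k
              end).

Definition mu (P : program) (G : goal) : option nat :=
  nat_min (fun n => exists rest, successful_derivation P G rest /\ lambda G rest = n).

Definition nu (P : program) (G : goal) : option nat :=
  nat_min (fun n => exists rest, successful_derivation P G rest /\ length rest = n).

(* A mode assigns to a predicate symbol p an optional list of [m_i];
   [true] stands for '+', [false] for '?'. *)
Definition mode := nat -> option (list bool).

Definition satisfies_mode (M : mode) (a : atom) : Prop :=
  match a with
  | Pred p args =>
      exists ms, M p = Some ms /\ length ms = length args /\
        forall i t, nth_error args i = Some t -> nth_error ms i = Some true -> ground t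
  | _ => False
  end.

Definition input_var (M : mode) (a : atom) (x : nat) : Prop :=
  match a with
  | Pred p args =>
      exists ms i t, M p = Some ms /\ nth_error ms i = Some true /\
        nth_error args i = Some t /\ occ x t
  | _ => False
  end.

Definition mode_for (M : mode) (P : program) : Prop :=
  forall C, In C P -> forall a, (a = hd C \/ In a (bd C)) ->
    match a with
    | Pred p args => exists ms, M p = Some ms /\ length ms = length args
    | _ => True
    end.

Definition prog_satisfies (P : program) (M : mode) : Prop :=
  forall A0 A G, nonbasic A0 -> satisfies_mode M A0 ->
    nonbasic A -> steps P [A0] (A :: G) -> satisfies_mode M A.

(* X is a local variable of the subgoal G in the clause H <- G1, G, G2 *)
Definition local_var (x : nat) (H : atom) (G1 G G2 : goal) : Prop :=
  occ_goal x G /\ ~ (occ_atom x H \/ occ_goal x G1 \/ occ_goal x G2).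

Definition safe_clause (M : mode) (C : clause) : Prop :=
  forall G1 t1 t2 G2, bd C = G1 ++ Neq t1 t2 :: G2 ->
    forall x, occ_atom x (Neq t1 t2) ->
      input_var M (hd C) x \/ local_var x (hd C) G1 [Neq t1 t2] G2.

Definition safe (M : mode) (P : program) : Prop :=
  forall C, In C P -> safe_clause M C.

Definition diseqs (D : goal) : Prop :=
  forall a, In a D -> exists t1 t2, a = Neq t1 t2.

(* Main.v *)
Require Import Defs.
From Stdlib Require Import List Arith Lia Relations ClassicalEpsilon Classical FunctionalExtensionality PropExtensionality.
Import ListNotations.

Fixpoint term_ind' (Pr : term -> Prop) (HV : forall x, Pr (Var x))
  (HF : forall f args, Forall Pr args -> Pr (Fn f args)) (t : term) : Pr t :=
  match t with
  | Var x => HV x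
  | Fn f args => HF f args ((fix go (l : list term) : Forall Pr l :=
       match l with [] => Forall_nil _ | t :: l' => Forall_cons _ (term_ind' Pr HV HF t) (go l') end) args)
  end.

Lemma occ_var_inv x y : occ x (Var y) -> x = y.
Proof. intro H; inversion H; auto. Qed.

Lemma occ_fn_inv x f args : occ x (Fn f args) -> exists t, In t args /\ occ x t.
Proof. intro H; inversion H; subst; eauto. Qed.

Lemma app_subst_ext s s' t : (forall x, occ x t -> s x = s' x) -> app_subst s t = app_subst s' t.
Proof.
  induction t as [x|f args IH] using term_ind'; intro H; simpl.
  - apply H; constructor.
  - f_equal. apply map_ext_in. intros a Ha.
    rewrite Forall_forall in IH. apply IH; auto.
    intros x Hx; apply H; econstructor; eauto.
Qed.

Lemma app_subst_comp s s' t :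
  app_subst s (app_subst s' t) = app_subst (fun x => app_subst s (s' x)) t.
Proof.
  induction t as [x|f args IH] using term_ind'; simpl; auto.
  f_equal. rewrite map_map. apply map_ext_in. intros a Ha.
  rewrite Forall_forall in IH; auto.
Qed.

Lemma occ_app_subst s y t :
  occ y (app_subst s t) <-> exists z, occ z t /\ occ y (s z).
Proof.
  induction t as [x|f args IH] using term_ind'; simpl.
  - split; [intro H; exists x; split; auto; constructor|].
    intros [z [Hz Hy]]. apply occ_var_inv in Hz; subst; auto.
  - rewrite Forall_forall in IH. split.
    + intro H. apply occ_fn_inv in H. destruct H as [t0 [Hin Ho]].
      apply in_map_iff in Hin. destruct Hin as [a [Ea Ha]]; subst.
      apply (IH a Ha) in Ho. destruct Ho as [z [Hz Hy]].
      exists z; split; auto. econstructor; eauto.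
    + intros [z [Hz Hy]]. apply occ_fn_inv in Hz. destruct Hz as [a [Ha Hza]].
      econstructor. apply in_map; eauto. apply (IH a Ha). eauto.
Qed.

Lemma term_bound t : exists N, forall x, occ x t -> x < N.
Proof.
  induction t as [x|f args IH] using term_ind'.
  - exists (S x). intros y Hy. apply occ_var_inv in Hy; lia.
  - assert (exists N, forall t x, In t args -> occ x t -> x < N) as [N HN].
    { induction IH as [|a l Ha Hl IHl].
      - exists 0; intros t x [].
      - destruct Ha as [N1 H1]. destruct IHl as [N2 H2].
        exists (N1 + N2). intros t x [<-|Hin] Ho.
        + specialize (H1 x Ho); lia.
        + specialize (H2 t x Hin Ho); lia. }
    exists N. intros x Hx. apply occ_fn_inv in Hx. destruct Hx as [t [Hin Ho]]; eauto.
Qed.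

Lemma terms_bound l : exists N, forall x, occ_terms x l -> x < N.
Proof.
  induction l as [|a l [N2 H2]].
  - exists 0. intros x [t [[] _]].
  - destruct (term_bound a) as [N1 H1]. exists (N1 + N2).
    intros x [t [[<-|Hin] Ho]].
    + specialize (H1 x Ho); lia.
    + assert (x < N2) by (apply H2; exists t; auto). lia.
Qed.

Lemma goal_bound g : exists N, forall x, occ_goal x g -> x < N.
Proof.
  induction g as [|a g [N2 H2]].
  - exists 0. intros x [b [[] _]].
  - destruct (terms_bound (atom_terms a)) as [N1 H1]. exists (N1 + N2).
    intros x [b [[<-|Hin] Ho]].
    + specialize (H1 x Ho); lia.
    + assert (x < N2) by (apply H2; exists b; auto). lia.
Qed.

Lemma occ_terms_map s y l :
  occ_terms y (map (app_subst s) l) <-> exists z, occ_terms z l /\ occ y (s z).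
Proof.
  split.
  - intros [t [Hin Ho]]. apply in_map_iff in Hin. destruct Hin as [a [<- Ha]].
    apply occ_app_subst in Ho. destruct Ho as [z [Hz Hy]]. exists z; split; auto; exists a; auto.
  - intros [z [[a [Ha Hz]] Hy]]. exists (app_subst s a); split. apply in_map; auto.
    apply occ_app_subst; eauto.
Qed.

Lemma occ_terms_app x l1 l2 : occ_terms x (l1 ++ l2) <-> occ_terms x l1 \/ occ_terms x l2.
Proof.
  split.
  - intros [t [Hin Ho]]. apply in_app_or in Hin. destruct Hin; [left|right]; exists t; auto.
  - intros [[t [Hin Ho]]|[t [Hin Ho]]]; exists t; split; auto; apply in_or_app; auto.
Qed.

Lemma atom_terms_subst s a : atom_terms (subst_atom s a) = map (app_subst s) (atom_terms a).
Proof. destruct a; reflexivity. Qed.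

Lemma occ_goal_subst s y g :
  occ_goal y (subst_goal s g) <-> exists z, occ_goal z g /\ occ y (s z).
Proof.
  unfold occ_goal, subst_goal, occ_atom. split.
  - intros [b [Hin Ho]]. apply in_map_iff in Hin. destruct Hin as [a [<- Ha]].
    rewrite atom_terms_subst in Ho. apply occ_terms_map in Ho.
    destruct Ho as [z [Hz Hy]]. exists z; split; eauto.
  - intros [z [[a [Ha Hz]] Hy]]. exists (subst_atom s a); split. apply in_map; auto.
    rewrite atom_terms_subst. apply occ_terms_map; eauto.
Qed.

Lemma occ_goal_app x g1 g2 : occ_goal x (g1 ++ g2) <-> occ_goal x g1 \/ occ_goal x g2.
Proof.
  split.
  - intros [t [Hin Ho]]. apply in_app_or in Hin. destruct Hin; [left|right]; exists t; auto.
  - intros [[t [Hin Ho]]|[t [Hin Ho]]]; exists t; split; auto; apply in_or_app; auto.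
Qed.

Lemma occ_goal_cons x a g : occ_goal x (a :: g) <-> occ_atom x a \/ occ_goal x g.
Proof.
  split.
  - intros [b [[<-|Hin] Ho]]; [left|right]; auto. exists b; auto.
  - intros [H|[b [Hin Ho]]]. exists a; simpl; auto. exists b; simpl; auto.
Qed.

Lemma map_subst_ext s s' l : (forall x, occ_terms x l -> s x = s' x) ->
  map (app_subst s) l = map (app_subst s') l.
Proof.
  intro H. apply map_ext_in. intros a Ha. apply app_subst_ext.
  intros x Hx; apply H; exists a; auto.
Qed.

Lemma subst_goal_ext s s' g : (forall x, occ_goal x g -> s x = s' x) ->
  subst_goal s g = subst_goal s' g.
Proof.
  intro H. apply map_ext_in. intros a Ha.
  assert (Ha' : forall x, occ_terms x (atom_terms a) -> s x = s' x)
    by (intros x Hx; apply H; exists a; auto).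
  destruct a; simpl in *; f_equal;
    try (apply app_subst_ext; intros x Hx; apply Ha'; eexists; split; [|eauto]; simpl; auto);
    apply map_subst_ext; auto.
Qed.

Lemma subst_goal_comp s s' g :
  subst_goal s (subst_goal s' g) = subst_goal (fun x => app_subst s (s' x)) g.
Proof.
  unfold subst_goal. rewrite map_map. apply map_ext. intro a.
  destruct a; simpl; f_equal; rewrite ?app_subst_comp; auto.
  rewrite map_map. apply map_ext. intro; apply app_subst_comp.
Qed.

Lemma subst_goal_app s g1 g2 : subst_goal s (g1 ++ g2) = subst_goal s g1 ++ subst_goal s g2.
Proof. apply map_app. Qed.

Lemma app_subst_id t : app_subst Var t = t.
Proof.
  induction t as [x|f args IH] using term_ind'; simpl; auto.
  f_equal. rewrite Forall_forall in IH. rewrite <- (map_id args) at 2. apply map_ext_in; auto.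
Qed.

Lemma subst_goal_fix s g : (forall x, occ_goal x g -> s x = Var x) -> subst_goal s g = g.
Proof.
  intro H. rewrite (subst_goal_ext s Var g H).
  unfold subst_goal. rewrite <- (map_id g) at 2. apply map_ext. intro a.
  destruct a; simpl; rewrite ?app_subst_id; auto.
  f_equal. rewrite <- (map_id args) at 2. apply map_ext. apply app_subst_id.
Qed.

Definition rn (pi : nat -> nat) : subst := fun x => Var (pi x).
Definition bij (pi pi' : nat -> nat) := (forall x, pi' (pi x) = x) /\ (forall x, pi (pi' x) = x).
Definition cnj (th : subst) (pi pi' : nat -> nat) : subst :=
  fun x => app_subst (rn pi) (th (pi' x)).

Lemma cnj_comm th pi pi' t : bij pi pi' ->
  app_subst (cnj th pi pi') (app_subst (rn pi) t) = app_subst (rn pi) (app_subst th t).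
Proof.
  intros [H1 H2]. rewrite !app_subst_comp. apply app_subst_ext. intros x _.
  simpl. unfold cnj. rewrite H1. reflexivity.
Qed.

Lemma cnj_comm_goal th pi pi' g : bij pi pi' ->
  subst_goal (cnj th pi pi') (subst_goal (rn pi) g) = subst_goal (rn pi) (subst_goal th g).
Proof.
  intros [H1 H2]. rewrite !subst_goal_comp. apply subst_goal_ext. intros x _.
  simpl. unfold cnj. rewrite H1. reflexivity.
Qed.

Lemma occ_rn pi y t : occ y (app_subst (rn pi) t) <-> exists z, occ z t /\ y = pi z.
Proof.
  rewrite occ_app_subst. split; intros [z [Hz Hy]]; exists z; split; auto.
  apply occ_var_inv in Hy; auto. subst; constructor.
Qed.

Lemma mgu_ren th l1 l2 pi pi' : bij pi pi' -> is_mgu th l1 l2 ->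
  is_mgu (cnj th pi pi') (map (app_subst (rn pi)) l1) (map (app_subst (rn pi)) l2).
Proof.
  intros Hb [Hu [Hm [Hi Hr]]]. pose proof Hb as [B1 B2].
  split; [|split; [|split]].
  - unfold unifier in *. rewrite !map_map.
    rewrite (map_ext _ (fun t => app_subst (rn pi) (app_subst th t))) by (intro; apply cnj_comm; auto).
    rewrite (map_ext (fun x => app_subst (cnj th pi pi') (app_subst (rn pi) x))
                     (fun t => app_subst (rn pi) (app_subst th t))) by (intro; apply cnj_comm; auto).
    rewrite <- !(map_map (app_subst th)). rewrite Hu. reflexivity.
  - intros s Hs. destruct (Hm (fun x => s (pi x))) as [eta Heta].
    + unfold unifier in *. rewrite !map_map in Hs.
      rewrite (map_ext (fun x => app_subst s (app_subst (rn pi) x)) (app_subst (fun x => s (pi x)))) in Hs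
        by (intro; rewrite app_subst_comp; reflexivity).
      rewrite (map_ext (fun x => app_subst s (app_subst (rn pi) x)) (app_subst (fun x => s (pi x)))) in Hs
        by (intro; rewrite app_subst_comp; reflexivity). exact Hs.
    + exists (fun y => eta (pi' y)). intro x. unfold cnj.
      rewrite app_subst_comp. simpl.
      rewrite (app_subst_ext _ eta) by (intros; rewrite B1; reflexivity).
      rewrite <- Heta, B2. reflexivity.
  - intro x. unfold cnj at 2. rewrite cnj_comm by auto. rewrite Hi. reflexivity.
  - intros x Hx. rewrite <- map_app.
    assert (Hne : th (pi' x) <> Var (pi' x)).
    { intro E. apply Hx. unfold cnj. rewrite E. simpl. unfold rn. rewrite B2. reflexivity. }
    destruct (Hr _ Hne) as [Ho Hy]. split.
    + apply occ_terms_map. exists (pi' x). split; auto. unfold rn; rewrite B2; constructor.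
    + intros y Hyo. unfold cnj in Hyo. apply occ_rn in Hyo. destruct Hyo as [z [Hz ->]].
      apply occ_terms_map. exists z; split; auto. constructor.
Qed.

Lemma rename_rename pi rho C :
  rename_clause pi (rename_clause rho C) = rename_clause (fun x => pi (rho x)) C.
Proof.
  unfold rename_clause; simpl. f_equal.
  - rewrite map_map. apply map_ext. intro; rewrite app_subst_comp; reflexivity.
  - rewrite subst_goal_comp. reflexivity.
Qed.

Lemma variant_ren C' C pi pi' : bij pi pi' -> variant C' C -> variant (rename_clause pi C') C.
Proof.
  intros [B1 B2] [rho [rho' [R1 [R2 ->]]]].
  exists (fun x => pi (rho x)), (fun x => rho' (pi' x)). repeat split.
  - intro x. rewrite B1, R1; auto.
  - intro x. rewrite R2, B2; auto.
  - apply rename_rename.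
Qed.

Lemma occ_clause_ren x pi C :
  occ_clause x (rename_clause pi C) <-> exists z, occ_clause z C /\ x = pi z.
Proof.
  unfold occ_clause, rename_clause, hd, occ_atom; simpl. split.
  - intros [H|H].
    + apply occ_terms_map in H. destruct H as [z [Hz Hx]]. apply occ_var_inv in Hx. eauto.
    + apply occ_goal_subst in H. destruct H as [z [Hz Hx]]. apply occ_var_inv in Hx. eauto.
  - intros [z [[H|H] ->]].
    + left. apply occ_terms_map. exists z; split; auto. constructor.
    + right. apply occ_goal_subst. exists z; split; auto. constructor.
Qed.

Lemma occ_goal_rn pi y g : occ_goal y (subst_goal (rn pi) g) <-> exists z, occ_goal z g /\ y = pi z.
Proof.
  rewrite occ_goal_subst. split; intros [z [Hz Hy]]; exists z; split; auto.
  apply occ_var_inv in Hy; auto. subst; constructor.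
Qed.

Lemma step_ren P g g' pi pi' : bij pi pi' -> step P g g' ->
  step P (subst_goal (rn pi) g) (subst_goal (rn pi) g').
Proof.
  intros Hb Hs. pose proof Hb as [B1 B2]. destruct Hs.
  - rewrite <- (cnj_comm_goal th pi pi') by auto. simpl.
    apply step_eq. apply (mgu_ren _ [t1] [t2] pi pi'); auto.
  - simpl. apply step_neq. intros [s Hs]. apply H. exists (fun x => s (pi x)).
    unfold unifier in *. simpl in *. rewrite !app_subst_comp in Hs. exact Hs.
  - rewrite <- (cnj_comm_goal th pi pi') by auto. rewrite subst_goal_app.
    change (step P (subst_goal (rn pi) (Pred p args :: G))
      (subst_goal (cnj th pi pi') (bd (rename_clause pi C') ++ subst_goal (rn pi) G))).
    change (subst_goal (rn pi) (Pred p args :: G)) with (Pred p (map (app_subst (rn pi)) args) :: subst_goal (rn pi) G).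
    eapply step_res with (C' := rename_clause pi C'); eauto.
    + apply variant_ren with pi'; auto.
    + intros x Hx Hg. apply occ_clause_ren in Hx. destruct Hx as [z [Hz ->]].
      change (occ_goal (pi z) (subst_goal (rn pi) (Pred p args :: G))) in Hg.
      apply occ_goal_rn in Hg. destruct Hg as [z' [Hz' E]].
      assert (z = z') by (rewrite <- (B1 z), E, B1; auto). subst.
      eapply H1; eauto.
    + apply (mgu_ren th args (hd_args C') pi pi'); auto.
Qed.

Inductive der (P : program) : goal -> nat -> nat -> Prop :=
| der_nil : der P [] 0 0
| der_step g g' n l : step P g g' -> der P g' n l ->
    der P g (S n) ((if starts_nonbasic g then 1 else 0) + l).

Lemma sb_ren pi g : starts_nonbasic (subst_goal (rn pi) g) = starts_nonbasic g.
Proof. destruct g as [|a g]; [|destruct a]; reflexivity. Qed.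

Lemma der_ren P g n l pi pi' : bij pi pi' -> der P g n l -> der P (subst_goal (rn pi) g) n l.
Proof.
  intros Hb Hd. induction Hd.
  - constructor.
  - rewrite <- (sb_ren pi). econstructor; eauto. apply (step_ren P g g' pi pi'); auto.
Qed.

Lemma der_step' P g g' n l k : step P g g' -> der P g' n l ->
  k = (if starts_nonbasic g then 1 else 0) + l -> der P g (S n) k.
Proof. intros; subst; econstructor; eauto. Qed.

Definition nonunif (D : goal) := forall t1 t2, In (Neq t1 t2) D -> ~ unifiable [t1] [t2].
Definition disj (H D : goal) := forall x, occ_goal x H -> ~ occ_goal x D.

Lemma step_nil P g : ~ step P [] g.
Proof. intro H; inversion H. Qed.

Lemma der_D P D : diseqs D -> forall n l, der P D n l -> n = length D /\ l = 0 /\ nonunif D.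
Proof.
  induction D as [|a D IH]; intros Hd n l Hder.
  - inversion Hder; subst. repeat split; auto. intros t1 t2 []. exfalso; eapply step_nil; eauto.
  - destruct (Hd a (or_introl eq_refl)) as [t1 [t2 ->]].
    inversion Hder; subst. inversion H; subst.
    destruct (IH (fun b Hb => Hd b (or_intror Hb)) _ _ H0) as [-> [-> Hn]].
    repeat split; auto. intros u1 u2 [E|Hin]. injection E; intros; subst; auto. auto.
Qed.

Lemma der_D_app P D H n l : diseqs D -> nonunif D -> der P H n l -> der P (D ++ H) (length D + n) l.
Proof.
  induction D as [|a D IH]; intros Hd Hn Hder; simpl; auto.
  destruct (Hd a (or_introl eq_refl)) as [t1 [t2 ->]].
  change l with ((if starts_nonbasic (Neq t1 t2 :: D ++ H) then 1 else 0) + l).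
  econstructor. apply step_neq. apply Hn; simpl; auto.
  apply IH; auto. intros b Hb; apply Hd; simpl; auto. intros u1 u2 Hin; apply Hn; simpl; auto.
Qed.

Lemma decompB P D G : diseqs D -> forall n l, der P (D ++ G) n l ->
  exists n1, n = length D + n1 /\ der P G n1 l /\ nonunif D.
Proof.
  induction D as [|a D IH]; intros Hd n l Hder.
  - exists n; repeat split; auto. intros t1 t2 [].
  - destruct (Hd a (or_introl eq_refl)) as [t1 [t2 ->]].
    inversion Hder; subst. inversion H; subst.
    destruct (IH (fun b Hb => Hd b (or_intror Hb)) _ _ H0) as [n1 [-> [Hg Hn]]].
    exists n1. repeat split; auto. intros u1 u2 [E|Hin]. injection E; intros; subst; auto. auto.
Qed.

Lemma mgu_vars th l1 l2 g x : is_mgu th l1 l2 -> occ_goal x (subst_goal th g) ->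
  occ_goal x g \/ occ_terms x (l1 ++ l2).
Proof.
  intros [_ [_ [_ Hr]]] Ho. apply occ_goal_subst in Ho. destruct Ho as [z [Hz Hx]].
  destruct (classic (th z = Var z)) as [E|E].
  - rewrite E in Hx. apply occ_var_inv in Hx; subst; auto.
  - right. apply (proj2 (Hr z E)); auto.
Qed.

Lemma mgu_fix th l1 l2 g : is_mgu th l1 l2 -> (forall x, occ_goal x g -> ~ occ_terms x (l1 ++ l2)) ->
  subst_goal th g = g.
Proof.
  intros [_ [_ [_ Hr]]] H. apply subst_goal_fix. intros x Hx.
  destruct (classic (th x = Var x)) as [E|E]; auto.
  exfalso. apply (H x Hx). exact (proj1 (Hr x E)).
Qed.

Lemma decompA P D : diseqs D -> forall n H l, der P (H ++ D) n l -> disj H D ->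
  exists n1, n = n1 + length D /\ der P H n1 l /\ nonunif D.
Proof.
  intros Hd n H l Hder. remember (H ++ D) as g. revert H Heqg.
  induction Hder as [|g g' n l Hs Hder IH]; intros H E Hdisj.
  - symmetry in E. apply app_eq_nil in E. destruct E; subst.
    exists 0; repeat split; auto. constructor. intros t1 t2 [].
  - destruct H as [|a Hr].
    + simpl in E; subst g.
      destruct (der_D P D Hd _ _ (der_step P D g' n l Hs Hder)) as [E1 [E2 Hn]].
      exists 0. rewrite E2. repeat split; auto. constructor.
    + simpl in E; subst g. remember (a :: Hr ++ D) as g0.
      destruct Hs as [t1 t2 G th Hm|t1 t2 G Hnu|p args G C C' th Hin Hv Hap Hp Hm];
        injection Heqg0; intros E1 E2; subst.
      * assert (Hfix : subst_goal th D = D).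
        { apply (mgu_fix th [t1] [t2]); auto. intros x Hx Ho. apply (Hdisj x); auto.
          apply occ_goal_cons; left; exact Ho. }
        rewrite subst_goal_app, Hfix in IH.
        destruct (IH (subst_goal th Hr) eq_refl) as [n1 [-> [Hg Hn]]].
        { intros x Hx. destruct (mgu_vars th [t1] [t2] Hr x Hm Hx) as [Ho|Ho]; apply Hdisj;
          apply occ_goal_cons; auto. }
        exists (S n1). repeat split; auto. eapply der_step'; [| eauto | reflexivity]. apply step_eq; auto.
      * destruct (IH Hr eq_refl) as [n1 [-> [Hg Hn]]].
        { intros x Hx; apply Hdisj; apply occ_goal_cons; auto. }
        exists (S n1). repeat split; auto. eapply der_step'; [| eauto | reflexivity]. apply step_neq; auto.
      * assert (HC : forall x, occ_clause x C' -> ~ occ_goal x D).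
        { intros x Hx Ho. apply (Hap x Hx). apply occ_goal_cons; right; apply occ_goal_app; auto. }
        assert (Hgood : forall x, occ_terms x (args ++ hd_args C') -> ~ occ_goal x D).
        { intros x Hx. apply occ_terms_app in Hx. destruct Hx as [Hx|Hx].
          - apply Hdisj. apply occ_goal_cons; left; exact Hx.
          - apply HC. left; exact Hx. }
        assert (Hfix : subst_goal th D = D).
        { apply (mgu_fix th args (hd_args C')); auto. intros x Hx Ho. apply (Hgood x Ho Hx). }
        rewrite app_assoc, subst_goal_app, Hfix in IH.
        destruct (IH (subst_goal th (bd C' ++ Hr)) eq_refl) as [n1 [-> [Hg Hn]]].
        { intros x Hx. destruct (mgu_vars th args (hd_args C') _ x Hm Hx) as [Ho|Ho].
          - apply occ_goal_app in Ho. destruct Ho as [Ho|Ho].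
            + apply HC. right; exact Ho.
            + apply Hdisj. apply occ_goal_cons; auto.
          - apply Hgood; auto. }
        exists (S n1). repeat split; auto. eapply der_step'; [| eauto | reflexivity]. eapply step_res; eauto.
        intros x Hx Ho. apply (Hap x Hx). apply occ_goal_cons in Ho. apply occ_goal_cons.
        destruct Ho as [Ho|Ho]; auto. right; apply occ_goal_app; auto.
Qed.

Definition swapf (N : nat) (Q : nat -> Prop) (x : nat) : nat :=
  if lt_dec x N then (if excluded_middle_informative (Q x) then x + N else x)
  else if lt_dec x (2 * N) then (if excluded_middle_informative (Q (x - N)) then x - N else x)
  else x.

Lemma swapf_inv N Q x : (forall y, Q y -> y < N) -> swapf N Q (swapf N Q x) = x.
Proof.
  intro HQ. unfold swapf.
  destruct (lt_dec x N) as [h1|h1].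
  - destruct (excluded_middle_informative (Q x)) as [q|q].
    + destruct (lt_dec (x + N) N); [lia|].
      destruct (lt_dec (x + N) (2 * N)); [|lia].
      replace (x + N - N) with x by lia.
      destruct (excluded_middle_informative (Q x)); [lia|contradiction].
    + destruct (lt_dec x N); [|lia].
      destruct (excluded_middle_informative (Q x)); [contradiction|lia].
  - destruct (lt_dec x (2 * N)) as [h2|h2].
    + destruct (excluded_middle_informative (Q (x - N))) as [q|q].
      * destruct (lt_dec (x - N) N); [|lia].
        destruct (excluded_middle_informative (Q (x - N))); [lia|contradiction].
      * destruct (lt_dec x N); [lia|]. destruct (lt_dec x (2 * N)); [|lia].
        destruct (excluded_middle_informative (Q (x - N))); [contradiction|lia].
    + destruct (lt_dec x N); [lia|]. destruct (lt_dec x (2 * N)); [lia|lia].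
Qed.

Lemma swapf_fix N Q x : x < N -> ~ Q x -> swapf N Q x = x.
Proof.
  intros h q. unfold swapf. destruct (lt_dec x N); [|lia].
  destruct (excluded_middle_informative (Q x)); [contradiction|lia].
Qed.

Lemma swapf_away N Q x : (forall y, Q y -> y < N) -> x < N -> ~ Q (swapf N Q x).
Proof.
  intros HQ h. unfold swapf. destruct (lt_dec x N); [|lia].
  destruct (excluded_middle_informative (Q x)) as [q|q]; auto.
  intro q'. specialize (HQ _ q'). lia.
Qed.

Lemma lift_step P H g' D : step P H g' -> disj H D ->
  exists pi pi', bij pi pi' /\ step P (H ++ D) (subst_goal (rn pi) g' ++ D) /\
    disj (subst_goal (rn pi) g') D.
Proof.
  intros Hs Hdisj.
  assert (Hid : forall g, subst_goal (rn (fun x => x)) g = g) by (intro; apply subst_goal_fix; reflexivity).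
  assert (Bid : bij (fun x => x) (fun x => x)) by (split; reflexivity).
  destruct Hs as [t1 t2 G th Hm|t1 t2 G Hnu|p args G C C' th Hin Hv Hap Hp Hm].
  - exists (fun x => x), (fun x => x). rewrite Hid. split; auto.
    assert (Hfix : subst_goal th D = D).
    { apply (mgu_fix th [t1] [t2]); auto. intros x Hx Ho. apply (Hdisj x); auto.
      apply occ_goal_cons; left; exact Ho. }
    split.
    + simpl. rewrite <- Hfix at 2. rewrite <- subst_goal_app. apply step_eq; auto.
    + intros x Hx. destruct (mgu_vars th [t1] [t2] G x Hm Hx) as [Ho|Ho]; apply Hdisj;
        apply occ_goal_cons; auto.
  - exists (fun x => x), (fun x => x). rewrite Hid. split; auto. split.
    + simpl. apply step_neq; auto.
    + intros x Hx; apply Hdisj; apply occ_goal_cons; auto.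
  - set (H := Pred p args :: G) in *.
    destruct (goal_bound H) as [N1 HN1].
    destruct (goal_bound D) as [N2 HN2].
    destruct (goal_bound (bd C')) as [N3 HN3].
    destruct (terms_bound (hd_args C')) as [N4 HN4].
    set (N := N1 + N2 + N3 + N4).
    set (pi := swapf N (fun x => occ_goal x D)).
    assert (HQ : forall y, occ_goal y D -> y < N) by (intros y hy; specialize (HN2 y hy); lia).
    assert (Hb : bij pi pi) by (split; intro; apply swapf_inv; auto).
    assert (P1 : forall x, occ_goal x H -> pi x = x).
    { intros x hx. apply swapf_fix. specialize (HN1 x hx); lia. apply Hdisj; auto. }
    assert (P2 : forall y, occ_clause y C' -> ~ occ_goal (pi y) D).
    { intros y [hy|hy]; apply (swapf_away N (fun x => occ_goal x D)); auto.
      specialize (HN4 y hy); lia. specialize (HN3 y hy); lia. }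
    assert (HH : subst_goal (rn pi) H = H) by (apply subst_goal_fix; intros; unfold rn; rewrite P1; auto).
    assert (Hargs : map (app_subst (rn pi)) args = args).
    { change (subst_goal (rn pi) H) with (Pred p (map (app_subst (rn pi)) args) :: subst_goal (rn pi) G) in HH.
      injection HH; auto. }
    assert (HG : subst_goal (rn pi) G = G).
    { change (subst_goal (rn pi) H) with (Pred p (map (app_subst (rn pi)) args) :: subst_goal (rn pi) G) in HH.
      injection HH; auto. }
    set (C'' := rename_clause pi C').
    set (th' := cnj th pi pi).
    assert (Hm' : is_mgu th' args (hd_args C'')).
    { rewrite <- Hargs at 1. apply (mgu_ren th args (hd_args C') pi pi); auto. }
    assert (HC'' : forall x, occ_clause x C'' -> ~ occ_goal x D).
    { intros x hx. apply occ_clause_ren in hx. destruct hx as [z [hz ->]]. apply P2; auto. }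
    assert (Hgood : forall x, occ_terms x (args ++ hd_args C'') -> ~ occ_goal x D).
    { intros x hx. apply occ_terms_app in hx. destruct hx as [hx|hx].
      - apply Hdisj. apply occ_goal_cons; left; exact hx.
      - apply HC''. left; exact hx. }
    assert (Hfix : subst_goal th' D = D).
    { apply (mgu_fix th' args (hd_args C'')); auto. intros x Hx Ho. apply (Hgood x Ho Hx). }
    assert (Eg : subst_goal (rn pi) (subst_goal th (bd C' ++ G)) = subst_goal th' (bd C'' ++ G)).
    { unfold th'. rewrite <- (cnj_comm_goal th pi pi) by auto. rewrite subst_goal_app, HG. reflexivity. }
    exists pi, pi. split; auto. rewrite Eg. split.
    + rewrite <- Hfix at 2. rewrite <- subst_goal_app, <- app_assoc.
      eapply step_res with (C' := C''); eauto.
      * apply variant_ren with pi; auto.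
      * intros x hx ho. apply occ_goal_cons in ho. destruct ho as [ho|ho].
        -- pose proof (P1 x (proj2 (occ_goal_cons _ _ _) (or_introl ho))) as E.
           apply occ_clause_ren in hx. destruct hx as [z [hz ->]].
           assert (z = pi z) by (pose proof (proj1 Hb z) as B; congruence).
           apply (Hap z hz). apply occ_goal_cons; left. rewrite H0; auto.
        -- apply occ_goal_app in ho. destruct ho as [ho|ho].
           ++ pose proof (P1 x (proj2 (occ_goal_cons _ _ _) (or_intror ho))) as E.
              apply occ_clause_ren in hx. destruct hx as [z [hz ->]].
              assert (z = pi z) by (pose proof (proj1 Hb z) as B; congruence).
              apply (Hap z hz). apply occ_goal_cons; right. rewrite H0; auto.
           ++ apply (HC'' x hx ho).
    + intros x Hx. destruct (mgu_vars th' args (hd_args C'') _ x Hm' Hx) as [Ho|Ho].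
      * apply occ_goal_app in Ho. destruct Ho as [Ho|Ho].
        -- apply HC''. right; exact Ho.
        -- apply Hdisj. apply occ_goal_cons; auto.
      * apply Hgood; auto.
Qed.

Lemma liftB P D : diseqs D -> nonunif D -> forall n H l, der P H n l -> disj H D ->
  der P (H ++ D) (n + length D) l.
Proof.
  intros Hd Hn n. induction n as [|n IH]; intros H l Hder Hdisj.
  - inversion Hder; subst. simpl.
    pose proof (der_D_app P D [] 0 0 Hd Hn (der_nil P)) as X.
    rewrite app_nil_r, Nat.add_0_r in X. exact X.
  - inversion Hder as [|g g' n' l' Hs Hd']; subst.
    destruct (lift_step P H g' D Hs Hdisj) as [pi [pi' [Hb [Hs' Hdj]]]].
    assert (Hne : H <> []) by (intro; subst; eapply step_nil; eauto).
    replace (starts_nonbasic H) with (starts_nonbasic (H ++ D))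
      by (destruct H; [contradiction|reflexivity]).
    simpl. econstructor; eauto. apply IH; auto. eapply der_ren; eauto.
Qed.

Lemma der_equiv P D G n l : diseqs D -> disj G D ->
  (der P (G ++ D) n l <-> der P (D ++ G) n l).
Proof.
  intros Hd Hdj. split; intro Hder.
  - destruct (decompA P D Hd n G l Hder Hdj) as [n1 [-> [Hg Hn]]].
    rewrite Nat.add_comm. apply der_D_app; auto.
  - destruct (decompB P D G Hd n l Hder) as [n1 [-> [Hg Hn]]].
    rewrite Nat.add_comm. apply liftB; auto.
Qed.

Lemma last_cons {A} (a : A) l d : last (a :: l) d = last l a.
Proof. revert a d; induction l as [|b l IH]; intros a d; [reflexivity|].
  change (last (a :: b :: l) d) with (last (b :: l) d). rewrite !IH. reflexivity. Qed.

Lemma der_chain P g n l : der P g n l <->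
  exists rest, successful_derivation P g rest /\ lambda g rest = l /\ length rest = n.
Proof.
  split.
  - intro Hd. induction Hd as [|g g' n l Hs Hd [rest [[Hc Hl] [Hla Hle]]]].
    + exists []. repeat split; reflexivity.
    + exists (g' :: rest). split; [split|split].
      * split; auto.
      * rewrite last_cons; auto.
      * unfold lambda in *. rewrite <- Hla. simpl. destruct (starts_nonbasic g); reflexivity.
      * simpl; auto.
  - intros [rest [[Hc Hl] [Hla Hle]]]. subst. revert g Hc Hl.
    induction rest as [|g' rest IH]; intros g Hc Hl.
    + simpl in Hl; subst. constructor.
    + destruct Hc as [Hs Hc]. rewrite last_cons in Hl.
      assert (E : lambda g (g' :: rest) = (if starts_nonbasic g then 1 else 0) + lambda g' rest)
        by (unfold lambda; simpl; destruct (starts_nonbasic g); reflexivity).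
      rewrite E. simpl length. apply der_step with g'; auto.
Qed.

Lemma steps_der P g : steps P g gtrue <-> exists n l, der P g n l.
Proof.
  split.
  - intro H. apply clos_rt_rt1n in H. remember gtrue as e. induction H.
    + subst. exists 0, 0. constructor.
    + destruct (IHclos_refl_trans_1n Heqe) as [n [l Hd]]. eexists; eexists; econstructor; eauto.
  - intros [n [l Hd]]. induction Hd.
    + apply rt_refl.
    + eapply rt_trans; [apply rt_step|]; eauto.
Qed.

Theorem lemma9 (P : program) (M : mode) (Diseqs G : goal) :
  mode_for M P -> safe M P -> prog_satisfies P M ->
  diseqs Diseqs ->
  (forall x, occ_goal x Diseqs -> ~ occ_goal x G) ->
  (steps P (G ++ Diseqs) gtrue <-> steps P (Diseqs ++ G) gtrue) /\
  mu P (G ++ Diseqs) = mu P (Diseqs ++ G) /\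
  nu P (G ++ Diseqs) = nu P (Diseqs ++ G).
Proof.
  intros _ _ _ Hd Hx.
  assert (Hdj : disj G Diseqs) by (intros x h1 h2; exact (Hx x h2 h1)).
  assert (E : forall n l, der P (G ++ Diseqs) n l <-> der P (Diseqs ++ G) n l)
    by (intros; apply der_equiv; auto).
  split; [|split].
  - rewrite !steps_der. split; intros [n [l h]]; exists n, l; apply E; auto.
  - unfold mu. f_equal. apply functional_extensionality. intro k.
    apply propositional_extensionality.
    split; intros [rest [hs hl]].
    + assert (h : der P (G ++ Diseqs) (length rest) k) by (apply der_chain; eauto).
      apply E, der_chain in h. destruct h as [r [a [b _]]]; eauto.
    + assert (h : der P (Diseqs ++ G) (length rest) k) by (apply der_chain; eauto).
      apply E, der_chain in h. destruct h as [r [a [b _]]]; eauto.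
  - unfold nu. f_equal. apply functional_extensionality. intro k.
    apply propositional_extensionality.
    split; intros [rest [hs hl]].
    + assert (h : der P (G ++ Diseqs) k (lambda _ rest)) by (apply der_chain; eauto).
      apply E, der_chain in h. destruct h as [r [a [_ b]]]; eauto.
    + assert (h : der P (Diseqs ++ G) k (lambda _ rest)) by (apply der_chain; eauto).
      apply E, der_chain in h. destruct h as [r [a [_ b]]]; eauto.
Qed.
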